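(* Assume $I_\delta=0$. There exists a constant $C_L$, independent of $\delta$ (and of $c\in[c_0,c_1]$ and $R_0\in\mathcal{R}_c$), such that for all $\delta$-admissible $S_1,S_2\in\mathsf{X}$ and $G_\ell=\mathcal{G}(S_\ell)$, $\ell=1,2$, $$\|\mathcal{A}^2G_2-\mathcal{A}^2G_1\|_\infty+\|\mathcal{A}G_2-\mathcal{A}G_1\|_\infty+\delta\|G_2-G_1\|_\infty\le C_L\,\delta\,\|S_2'-S_1'\|_\infty .$$
   Context: $(\mathcal{A}F)(x)=\int_{x-1/2}^{x+1/2}F(s)\,ds$, $\Delta_1F(x)=F(x+1)-2F(x)+F(x-1)$, $a(k)=\frac{\sin(k/2)}{k/2}$, $\Psi_0'(r)=\mathrm{sgn}(r)$. Potentials: $(\Psi_\delta)_{\delta>0}$ is a family of $C^2$ functions such that $\Psi_\delta'(r)=\mathrm{sgn}(r)$ for $r\notin(-\delta,\delta)$, and $|\Psi_\delta'|\le C_\Psi$, $|\Psi_\delta''|\le C_\Psi/\delta$ on $\mathbb{R}$ with $C_\Psi$ independent of $\delta$; $I_\delta:=\frac12\int_{\mathbb{R}}(\Psi_\delta'-\Psi_0')\,dr$. Unperturbed waves (standing hypothesis, a known result): there are constants $0<c_0<1$ and $x_0,r_0,d_0,D_0>0$ such that for every $c\in[c_0,1)$ the equation $a(k)=c$ has exactly one positive solution $k_c$, and there is a two-parameter family $\mathcal{R}_c$ of functions $R_0\in W^{2,\infty}(\mathbb{R})$ solving $c^2R_0''=\Delta_1(R_0-\mathrm{sgn}(R_0))$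 with $R_0(0)=0$, given by $R_0=\bar R_0+\alpha(\cos(k_c\cdot)-1)+\beta\sin(k_c\cdot)$, $(\alpha,\beta)$ in an open neighbourhood $U_c$ of $0\in\mathbb{R}^2$, where $\bar R_0$ is a fixed member for which $\lim_{x\to+\infty}\bar R_0(x)$ exists and $\lim_{x\to-\infty}(\bar R_0(x)-\alpha_c^-(\cos(k_cx)-1)-\beta_c^-\sin(k_cx))$ exists for some constants $\alpha_c^-,\beta_c^-$. Every $R_0\in\mathcal{R}_c$ satisfies $\|R_0\|_\infty\le D_0(1-c^2)^{-1}$, $R_0(x)>r_0$ for $x>x_0$, $R_0(x)<-r_0$ for $x<-x_0$, $R_0'(x)>d_0$ for $|x|<x_0$. Setting: $c_1\in(c_0,1)$ fixed, $c\in[c_0,c_1]$, $R_0\in\mathcal{R}_c$ fixed. $\mathsf{X}:=\{S\in W^{2,\infty}(\mathbb{R}):S(0)=0,\ \lim_{x\to+\infty}S(x)\text{ exists}\}$. $\mathcal{G}(S)(x):=\Psi_\delta'(R_0(x)+S(x))-\Psi_0'(R_0(x))$. $S\in\mathsf{X}$ is called $\delta$-admissible if there exist $x_-<0<x_+$ with: $R_0(x_\pm)+S(x_\pm)=\pm\delta$; $R_0(x)+S(x)<-\delta$ for $x<x_-$; $R_0(x)+S(x)>\delta$ for $x>x_+$; and $\frac12R_0'(0)<R_0'(x)+S'(x)<2R_0'(0)$ for $x_-<x<x_+$. *)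

(* Defs.v *)
From Stdlib Require Import Reals Lra Classical ClassicalEpsilon.
Open Scope R_scope.

(* sign function: sgn r = 1, -1, 0 for r > 0, r < 0, r = 0.  Psi_0'(r) = sgn r. *)
Definition sgn (r : R) : R :=
  if Rlt_dec 0 r then 1 else if Rlt_dec r 0 then -1 else 0.

(* Total Riemann integral: the value of RiemannInt when f is Riemann
   integrable on [a,b] (the value is proof-independent), and 0 otherwise. *)
Definition Rint (f : R -> R) (a b : R) : R :=
  match excluded_middle_informative
          (exists I, exists pr : Riemann_integrable f a b, RiemannInt pr = I) with
  | left h => proj1_sig (constructive_indefinite_description _ h)
  | right _ => 0
  end.

Definition Aop (F : R -> R) (x : R) : R := Rint F (x - /2) (x + /2).

Definition Delta1 (F : R -> R) (x : R) : R := F (x + 1) - 2 * F x + F (x - 1).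

Definition afun (k : R) : R := sin (k / 2) / (k / 2).

Definition lim_pinf (f : R -> R) (L : R) : Prop :=
  forall eps, 0 < eps -> exists M, forall x, M < x -> Rabs (f x - L) < eps.
Definition lim_minf (f : R -> R) (L : R) : Prop :=
  forall eps, 0 < eps -> exists M, forall x, x < M -> Rabs (f x - L) < eps.

(* W^{2,oo}(R) (continuous representative): f is differentiable, f and f'
   are bounded, f' is Lipschitz. *)
Definition W2inf (f : R -> R) : Prop :=
  exists f1 : R -> R,
    (forall x, derivable_pt_lim f x (f1 x)) /\
    (exists B, forall x, Rabs (f x) <= B /\ Rabs (f1 x) <= B) /\
    (exists K, forall x y, Rabs (f1 x - f1 y) <= K * Rabs (x - y)).

Definition inX (S : R -> R) : Prop :=
  W2inf S /\ S 0 = 0 /\ exists L, lim_pinf S L.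

Definition PsiFamily (CPsi : R) (Psi dPsi ddPsi : R -> R -> R) : Prop :=
  forall d, 0 < d ->
    (forall r, derivable_pt_lim (Psi d) r (dPsi d r)) /\
    (forall r, derivable_pt_lim (dPsi d) r (ddPsi d r)) /\
    continuity (ddPsi d) /\
    (forall r, ~ (-d < r < d) -> dPsi d r = sgn r) /\
    (forall r, Rabs (dPsi d r) <= CPsi) /\
    (forall r, Rabs (ddPsi d r) <= CPsi / d).

(* I_delta = 1/2 int_R (Psi_delta' - Psi_0') dr ; the integrand vanishes
   outside (-delta, delta). *)
Definition Idelta (dPsi : R -> R -> R) (d : R) : R :=
  / 2 * Rint (fun r => dPsi d r - sgn r) (- d) d.

Definition member (k : R -> R) (Rbar : R -> R -> R) (c alpha beta : R) (x : R) : R :=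
  Rbar c x + alpha * (cos (k c * x) - 1) + beta * sin (k c * x).

Definition UnperturbedWaves (c0 x0 r0 d0 D0 : R) (k : R -> R)
    (Rbar : R -> R -> R) (U : R -> R -> R -> Prop) (alm bem : R -> R) : Prop :=
  0 < c0 < 1 /\ 0 < x0 /\ 0 < r0 /\ 0 < d0 /\ 0 < D0 /\
  forall c, c0 <= c < 1 ->
    (0 < k c /\ afun (k c) = c /\ forall k', 0 < k' -> afun k' = c -> k' = k c) /\
    U c 0 0 /\
    (forall al be, U c al be -> exists eps, 0 < eps /\
        forall al' be', Rabs (al' - al) < eps -> Rabs (be' - be) < eps -> U c al' be') /\
    (exists L, lim_pinf (Rbar c) L) /\
    (exists L, lim_minf (fun x => Rbar c x - alm c * (cos (k c * x) - 1)
                                  - bem c * sin (k c * x)) L) /\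
    forall al be, U c al be ->
      let R0 := member k Rbar c al be in
      W2inf R0 /\ R0 0 = 0 /\
      (forall dR0 : R -> R, (forall x, derivable_pt_lim R0 x (dR0 x)) ->
         (* c^2 R0'' = Delta_1 (R0 - sgn R0), in integrated (weak) form *)
         (forall x y, x <= y ->
            c ^ 2 * (dR0 y - dR0 x) = Rint (Delta1 (fun s => R0 s - sgn (R0 s))) x y) /\
         (forall x, Rabs x < x0 -> d0 < dR0 x)) /\
      (forall x, Rabs (R0 x) <= D0 / (1 - c ^ 2)) /\
      (forall x, x0 < x -> r0 < R0 x) /\
      (forall x, x < - x0 -> R0 x < - r0).

Definition Gop (dPsi : R -> R -> R) (d : R) (R0 S : R -> R) (x : R) : R :=
  dPsi d (R0 x + S x) - sgn (R0 x).

(* delta-admissibility; dR0, dS are the derivatives of R0, S *)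
Definition admissible (d : R) (R0 dR0 S dS : R -> R) : Prop :=
  exists xm xp, xm < 0 < xp /\
    R0 xm + S xm = - d /\ R0 xp + S xp = d /\
    (forall x, x < xm -> R0 x + S x < - d) /\
    (forall x, xp < x -> d < R0 x + S x) /\
    (forall x, xm < x < xp -> / 2 * dR0 0 < dR0 x + dS x < 2 * dR0 0).

(* Main.v *)
Require Import Defs.
From Stdlib Require Import Reals Lra Classical ClassicalEpsilon FunctionalExtensionality.
From Coquelicot Require Import Coquelicot.
Open Scope R_scope.

Lemma Rint_RInt f a b : ex_RInt f a b -> Rint f a b = RInt f a b.
Proof.
  intros H. unfold Rint.
  destruct (excluded_middle_informative _) as [e|n].
  - destruct (constructive_indefinite_description _ e) as [I [pr HI]]; simpl.
    rewrite <- HI. symmetry. apply RInt_Reals.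
  - exfalso. apply n. exists (RInt f a b), (ex_RInt_Reals_0 f a b H).
    symmetry; apply RInt_Reals.
Qed.

Lemma RInt_minus_R f g a b : ex_RInt f a b -> ex_RInt g a b ->
  RInt (fun x => f x - g x) a b = RInt f a b - RInt g a b.
Proof. intros H1 H2. exact (RInt_minus f g a b H1 H2). Qed.

Lemma ex_RInt_minus_R f g a b : ex_RInt f a b -> ex_RInt g a b ->
  ex_RInt (fun x => f x - g x) a b.
Proof. intros H1 H2. exact (ex_RInt_minus f g a b H1 H2). Qed.

Lemma RInt_Chasles_R f a b c : ex_RInt f a b -> ex_RInt f b c ->
  RInt f a b + RInt f b c = RInt f a c.
Proof. intros H1 H2. exact (RInt_Chasles f a b c H1 H2). Qed.

Lemma RInt_swap_R f a b : ex_RInt f a b -> RInt f b a = - RInt f a b.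
Proof. intros H. symmetry. exact (opp_RInt_swap f a b H). Qed.

Lemma RInt_zero f a b : a <= b -> (forall x, a < x < b -> f x = 0) -> RInt f a b = 0.
Proof.
  intros Hab H. rewrite (RInt_ext f (fun _ => 0)).
  - rewrite RInt_const. exact (scal_zero_r (V:=R_NormedModule) (b - a)).
  - intros x. rewrite Rmin_left, Rmax_right by lra. apply H.
Qed.

Definition good (f : R -> R) := forall u v, ex_RInt f u v.

Lemma RInt_lip f B u v : good f -> (forall z, Rabs (f z) <= B) ->
  Rabs (RInt f u v) <= B * Rabs (v - u).
Proof.
  intros Hg HB. destruct (Rle_dec u v).
  - rewrite (Rabs_right (v - u)) by lra.
    rewrite Rmult_comm. apply abs_RInt_le_const; auto.
  - rewrite <- (Ropp_involutive (RInt f u v)), <- RInt_swap_R, Rabs_Ropp by auto.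
    rewrite (Rabs_left (v - u)) by lra.
    replace (- (v-u)) with (u - v) by ring.
    rewrite Rmult_comm. apply abs_RInt_le_const; auto. lra.
Qed.

Lemma A_cont f B : good f -> (forall z, Rabs (f z) <= B) ->
  forall t, continuity_pt (fun t => RInt f (t - /2) (t + /2)) t.
Proof.
  intros Hg HB t.
  assert (B0 : 0 <= B) by (specialize (HB 0); pose proof (Rabs_pos (f 0)); lra).
  intros eps Heps. exists (eps / (2*B+1)). split.
  { apply Rdiv_lt_0_compat; lra. }
  intros x [_ Hx]. simpl in *. unfold R_dist in *.
  rewrite <- (RInt_Chasles_R f (x - /2) (t - /2) (x + /2)) by auto.
  rewrite <- (RInt_Chasles_R f (t - /2) (t + /2) (x + /2)) by auto.
  replace (RInt f (x - / 2) (t - / 2) + (RInt f (t - / 2) (t + / 2) + RInt f (t + / 2) (x + / 2)) -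
      RInt f (t - / 2) (t + / 2)) with (RInt f (x - / 2) (t - / 2) + RInt f (t + / 2) (x + / 2)) by ring.
  eapply Rle_lt_trans. apply Rabs_triang.
  pose proof (RInt_lip f B (x - /2) (t - /2) Hg HB).
  pose proof (RInt_lip f B (t + /2) (x + /2) Hg HB).
  replace (t - /2 - (x - /2)) with (-(x-t)) in H by ring. rewrite Rabs_Ropp in H.
  replace (x + /2 - (t + /2)) with (x-t) in H0 by ring.
  assert (Hx' : Rabs (x - t) * (2*B+1) < eps).
  { apply (Rmult_lt_compat_r (2*B+1)) in Hx; [|lra].
    unfold Rdiv in Hx. rewrite Rmult_assoc, Rinv_l, Rmult_1_r in Hx; lra. }
  pose proof (Rabs_pos (x-t)). nra.
Qed.

Lemma cont_cont f x : continuity_pt f x -> continuous f x.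
Proof. intros H. apply continuity_pt_filterlim. exact H. Qed.

Lemma supp_bound f rho M a : 0 <= rho -> good f -> (forall z, Rabs (f z) <= M) ->
  (forall z, rho < Rabs z -> f z = 0) ->
  Rabs (RInt f (a - /2) (a + /2)) <= 2 * rho * M.
Proof.
  intros Hr Hg HM Hz.
  set (a0 := a - /2). set (b := a + /2).
  set (p := Rmin b (Rmax a0 (-rho))). set (q := Rmax p (Rmin b rho)).
  assert (F1 : a0 <= p <= b) by (unfold p, a0, b, Rmin, Rmax; repeat destruct Rle_dec; lra).
  assert (F2 : p <= q <= b) by (unfold q, p, a0, b, Rmin, Rmax; repeat destruct Rle_dec; lra).
  assert (F3 : q - p <= 2 * rho) by (unfold q, p, a0, b, Rmin, Rmax; repeat destruct Rle_dec; lra).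
  assert (F4 : forall z, a0 < z < p -> z < - rho) by
    (intros z Hz'; unfold p, a0, b, Rmin, Rmax in *; repeat destruct Rle_dec; lra).
  assert (F5 : forall z, q < z < b -> rho < z) by
    (intros z Hz'; unfold q, p, a0, b, Rmin, Rmax in *; repeat destruct Rle_dec; lra).
  rewrite <- (RInt_Chasles_R f a0 p b) by auto.
  rewrite <- (RInt_Chasles_R f p q b) by auto.
  rewrite (RInt_zero f a0 p) by (try lra; intros z Hz'; apply Hz; specialize (F4 z Hz');
     rewrite Rabs_left; lra).
  rewrite (RInt_zero f q b) by (try lra; intros z Hz'; apply Hz; specialize (F5 z Hz');
     rewrite Rabs_right; lra).
  rewrite Rplus_0_l, Rplus_0_r.
  assert (M0 : 0 <= M) by (specialize (HM 0); pose proof (Rabs_pos (f 0)); lra).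
  eapply Rle_trans. apply abs_RInt_le_const; auto. lra. intros; auto.
  apply Rmult_le_compat_r; lra.
Qed.

Lemma sgn_pos r : 0 < r -> sgn r = 1.
Proof. intros; unfold sgn; destruct (Rlt_dec 0 r); lra. Qed.
Lemma sgn_neg r : r < 0 -> sgn r = -1.
Proof. intros; unfold sgn; destruct (Rlt_dec 0 r); [lra|]; destruct (Rlt_dec r 0); lra. Qed.
Lemma sgn_abs r : Rabs (sgn r) <= 1.
Proof. unfold sgn; destruct (Rlt_dec 0 r); [|destruct (Rlt_dec r 0)];
  [rewrite Rabs_right|rewrite Rabs_left|rewrite Rabs_R0]; lra. Qed.

Lemma ex_RInt_sgn0 u : ex_RInt sgn u 0.
Proof.
  destruct (Rlt_dec u 0).
  - apply (ex_RInt_ext (fun _ => -1)); [|apply ex_RInt_const].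
    intros x. rewrite Rmin_left, Rmax_right by lra. intros; rewrite sgn_neg; lra.
  - apply (ex_RInt_ext (fun _ => 1)); [|apply ex_RInt_const].
    intros x. rewrite Rmin_right, Rmax_left by lra. intros; rewrite sgn_pos; lra.
Qed.

Lemma good_sgn : good sgn.
Proof.
  intros u v. apply (ex_RInt_Chasles _ u 0 v). apply ex_RInt_sgn0.
  apply ex_RInt_swap, ex_RInt_sgn0.
Qed.

Lemma mvt_bound f f' a b K : (forall x, derivable_pt_lim f x (f' x)) ->
  (forall x, Rabs (f' x) <= K) -> Rabs (f b - f a) <= K * Rabs (b - a).
Proof.
  intros Hd HK. destruct (Rtotal_order a b) as [h|[h|h]].
  - destruct (MVT_cor2 f f' a b h) as [c [E _]]; auto.
    rewrite E, Rabs_mult. apply Rmult_le_compat_r; auto. apply Rabs_pos.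
  - subst. replace (f b - f b) with 0 by ring. replace (b - b) with 0 by ring.
    rewrite Rabs_R0. specialize (HK b). pose proof (Rabs_pos (f' b)). lra.
  - destruct (MVT_cor2 f f' b a h) as [c [E _]]; auto.
    replace (f b - f a) with (-(f a - f b)) by ring.
    replace (b - a) with (-(a - b)) by ring. rewrite !Rabs_Ropp.
    rewrite E, Rabs_mult. apply Rmult_le_compat_r; auto. apply Rabs_pos.
Qed.

Lemma adm_bound d R0 dR0 S dS d0 : 0 < d -> 0 < d0 < dR0 0 -> R0 0 = 0 -> S 0 = 0 ->
  (forall x, derivable_pt_lim R0 x (dR0 x)) -> (forall x, derivable_pt_lim S x (dS x)) ->
  admissible d R0 dR0 S dS ->
  (forall z, 2*d/d0 < z -> d < R0 z + S z) /\ (forall z, z < -(2*d/d0) -> R0 z + S z < -d).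
Proof.
  intros Hd Hd0 HR HS DR DS (xm & xp & Hxx & Em & Ep & Hlt & Hgt & Hder).
  assert (Dg : forall x, derivable_pt_lim (fun x => R0 x + S x) x (dR0 x + dS x)).
  { intros x. apply (derivable_pt_lim_plus R0 S); auto. }
  assert (Bp : xp * d0 < 2 * d).
  { destruct (MVT_cor2 _ _ 0 xp ltac:(lra) (fun c _ => Dg c)) as [c [E Hc]].
    rewrite Ep, HR, HS in E. specialize (Hder c ltac:(lra)). nra. }
  assert (Bm : - xm * d0 < 2 * d).
  { destruct (MVT_cor2 _ _ xm 0 ltac:(lra) (fun c _ => Dg c)) as [c [E Hc]].
    rewrite Em, HR, HS in E. specialize (Hder c ltac:(lra)). nra. }
  assert (Q : 2 * d / d0 * d0 = 2 * d) by (field; lra).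
  split; intros z Hz.
  - apply Hgt. nra.
  - apply Hlt. nra.
Qed.

Lemma sign_R0 R0 dR0 x0 r0 d0 : 0 < d0 -> R0 0 = 0 -> (forall x, derivable_pt_lim R0 x (dR0 x)) ->
  (forall x, Rabs x < x0 -> d0 < dR0 x) -> (forall x, x0 < x -> r0 < R0 x) ->
  (forall x, x < - x0 -> R0 x < - r0) -> 0 < r0 ->
  forall z, sgn (R0 z) = sgn z.
Proof.
  intros Hd0 H0 HD Hd Hp Hn Hr z.
  destruct (Rtotal_order z 0) as [h|[h|h]].
  - rewrite (sgn_neg z h). apply sgn_neg.
    destruct (Rlt_dec z (-x0)). { specialize (Hn z r). lra. }
    destruct (MVT_cor2 R0 dR0 z 0 h (fun c _ => HD c)) as [c [E Hc]].
    assert (Rabs c < x0) by (rewrite Rabs_left; lra).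
    specialize (Hd c H). nra.
  - subst. rewrite H0. reflexivity.
  - rewrite (sgn_pos z h). apply sgn_pos.
    destruct (Rlt_dec x0 z). { specialize (Hp z r). lra. }
    destruct (MVT_cor2 R0 dR0 0 z h (fun c _ => HD c)) as [c [E Hc]].
    assert (Rabs c < x0) by (rewrite Rabs_right; lra).
    specialize (Hd c H). nra.
Qed.

Theorem lemma3p5
  (CPsi : R) (Psi dPsi ddPsi : R -> R -> R)
  (c0 x0 r0 d0 D0 : R) (k : R -> R) (Rbar : R -> R -> R)
  (U : R -> R -> R -> Prop) (alm bem : R -> R) (c1 : R) :
  PsiFamily CPsi Psi dPsi ddPsi ->
  UnperturbedWaves c0 x0 r0 d0 D0 k Rbar U alm bem ->
  c0 < c1 < 1 ->
  exists CL : R,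
    forall (d c al be : R) (dR0 S1 S2 dS1 dS2 : R -> R),
      0 < d -> Idelta dPsi d = 0 ->
      c0 <= c <= c1 -> U c al be ->
      (forall x, derivable_pt_lim (member k Rbar c al be) x (dR0 x)) ->
      inX S1 -> inX S2 ->
      (forall x, derivable_pt_lim S1 x (dS1 x)) ->
      (forall x, derivable_pt_lim S2 x (dS2 x)) ->
      admissible d (member k Rbar c al be) dR0 S1 dS1 ->
      admissible d (member k Rbar c al be) dR0 S2 dS2 ->
      let G1 := Gop dPsi d (member k Rbar c al be) S1 in
      let G2 := Gop dPsi d (member k Rbar c al be) S2 in
      forall L, (forall t, Rabs (dS2 t - dS1 t) <= L) ->
      forall x y z,
        Rabs (Aop (Aop G2) x - Aop (Aop G1) x) + Rabs (Aop G2 y - Aop G1 y)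
        + d * Rabs (G2 z - G1 z) <= CL * d * L.
Proof.
  intros HPsi HUW Hc1.
  destruct HUW as (Hc0 & Hx0 & Hr0 & Hd0 & HD0 & HUW).
  assert (CP0 : 0 <= CPsi).
  { destruct (HPsi 1 ltac:(lra)) as (_&_&_&_&H&_). specialize (H 0).
    pose proof (Rabs_pos (dPsi 1 0)); lra. }
  exists (16*CPsi/(d0*d0) + 2*CPsi/d0).
  intros d c al be dR0 S1 S2 dS1 dS2 Hd HI Hc HU HdR0 HX1 HX2 HdS1 HdS2 Ha1 Ha2 G1 G2 L HL x y z.
  destruct (HUW c ltac:(lra)) as (_&_&_&_&_&HR).
  specialize (HR al be HU). cbv zeta in HR.
  set (R0 := member k Rbar c al be) in *.
  destruct HR as (_ & HR00 & HdR & _ & Hpos & Hneg).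
  destruct (HdR dR0 HdR0) as [_ Hd0R].
  destruct (HPsi d Hd) as (_ & Hdd & _ & Hsg & HbP & HbPP).
  destruct HX1 as (_ & HS10 & _). destruct HX2 as (_ & HS20 & _).
  assert (L0 : 0 <= L) by (specialize (HL 0); pose proof (Rabs_pos (dS2 0 - dS1 0)); lra).
  assert (DR00 : d0 < dR0 0) by (apply Hd0R; rewrite Rabs_R0; lra).
  set (rho := 2 * d / d0).
  assert (rho0 : 0 <= rho) by (unfold rho; apply Rlt_le, Rdiv_lt_0_compat; lra).
  set (M := 2 * CPsi * L / d0).
  destruct (adm_bound d R0 dR0 S1 dS1 d0 Hd ltac:(lra) HR00 HS10 HdR0 HdS1 Ha1) as [P1 N1].
  destruct (adm_bound d R0 dR0 S2 dS2 d0 Hd ltac:(lra) HR00 HS20 HdR0 HdS2 Ha2) as [P2 N2].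
  set (D := fun z => G2 z - G1 z).
  assert (DE : forall z, D z = dPsi d (R0 z + S2 z) - dPsi d (R0 z + S1 z)).
  { intros w. unfold D, G1, G2, Gop. fold R0. ring. }
  assert (Lip : forall u v, Rabs (dPsi d u - dPsi d v) <= CPsi / d * Rabs (u - v)).
  { intros u v. apply (mvt_bound (dPsi d) (ddPsi d)); auto. }
  assert (SL : forall w, Rabs (S2 w - S1 w) <= L * Rabs w).
  { intros w. replace w with (w - 0) at 3 by ring.
    replace (S2 w - S1 w) with ((S2 w - S1 w) - (S2 0 - S1 0)) by (rewrite HS10, HS20; ring).
    apply (mvt_bound (fun x => S2 x - S1 x) (fun x => dS2 x - dS1 x)); auto.
    intros; apply (derivable_pt_lim_minus S2 S1); auto. }
  assert (Dz : forall w, rho < Rabs w -> D w = 0).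
  { intros w Hw. rewrite DE. destruct (Rle_dec 0 w).
    - rewrite Rabs_right in Hw by lra.
      specialize (P1 w Hw); specialize (P2 w Hw).
      rewrite (Hsg (R0 w + S2 w)), (Hsg (R0 w + S1 w)) by lra.
      rewrite !sgn_pos by lra. ring.
    - rewrite Rabs_left in Hw by lra.
      assert (w < - rho) by lra.
      specialize (N1 w H); specialize (N2 w H).
      rewrite (Hsg (R0 w + S2 w)), (Hsg (R0 w + S1 w)) by lra.
      rewrite !sgn_neg by lra. ring. }
  assert (DM : forall w, Rabs (D w) <= M).
  { intros w. assert (M0 : 0 <= M) by (unfold M; apply Rmult_le_pos; [nra|]; apply Rlt_le, Rinv_0_lt_compat; lra).
    destruct (Rle_dec (Rabs w) rho).
    - rewrite DE. eapply Rle_trans. apply Lip.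
      replace (R0 w + S2 w - (R0 w + S1 w)) with (S2 w - S1 w) by ring.
      assert (CPsi / d * (L * rho) = M) by (unfold M, rho; field; lra).
      rewrite <- H. apply Rmult_le_compat_l. apply Rmult_le_pos; [lra|apply Rlt_le, Rinv_0_lt_compat; lra].
      eapply Rle_trans. apply SL. apply Rmult_le_compat_l; lra.
    - rewrite Dz by lra. rewrite Rabs_R0; lra. }
  assert (Sg : forall w, sgn (R0 w) = sgn w).
  { apply (sign_R0 R0 dR0 x0 r0 d0); auto. }
  assert (GG : forall S dS, (forall x, derivable_pt_lim S x (dS x)) ->
             good (Gop dPsi d R0 S) /\ forall w, Rabs (Gop dPsi d R0 S w) <= CPsi + 1).
  { intros S dS HS. split.
    - intros u v. apply (ex_RInt_ext (fun w => dPsi d (R0 w + S w) - sgn w)).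
      { intros w _. unfold Gop. rewrite Sg. reflexivity. }
      apply ex_RInt_minus_R; [|apply good_sgn].
      apply (ex_RInt_continuous (V:=R_CompleteNormedModule)). intros w _. apply cont_cont.
      assert (HH : derivable_pt_lim (comp (dPsi d) (fun x => R0 x + S x)) w
                     (ddPsi d (R0 w + S w) * (dR0 w + dS w))).
      { apply derivable_pt_lim_comp; auto. apply (derivable_pt_lim_plus R0 S); auto. }
      exact (derivable_continuous_pt _ _ (exist _ _ HH)).
    - intros w. unfold Gop. unfold Rminus. eapply Rle_trans. apply Rabs_triang.
      rewrite Rabs_Ropp. pose proof (HbP (R0 w + S w)). pose proof (sgn_abs (R0 w)). lra.
  }
  destruct (GG S1 dS1 HdS1) as [g1 b1]. destruct (GG S2 dS2 HdS2) as [g2 b2].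
  fold G1 in g1, b1. fold G2 in g2, b2.
  assert (gD : good D) by (intros u v; unfold D; apply ex_RInt_minus_R; auto).
  assert (AE : forall G, good G -> forall t, Aop G t = RInt G (t - /2) (t + /2)).
  { intros G HG t. unfold Aop. apply Rint_RInt; auto. }
  assert (goodA : forall G B, good G -> (forall w, Rabs (G w) <= B) ->
      good (fun t => RInt G (t - /2) (t + /2))).
  { intros G B HG HB u v. apply (ex_RInt_continuous (V:=R_CompleteNormedModule)).
    intros; apply cont_cont; apply (A_cont G B); auto. }
  assert (AAE : forall G B, good G -> (forall w, Rabs (G w) <= B) ->
      Aop (Aop G) x = RInt (fun t => RInt G (t - /2) (t + /2)) (x - /2) (x + /2)).
  { intros G B HG HB. replace (Aop G) with (fun t => RInt G (t - /2) (t + /2)).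
    apply AE. apply (goodA G B); auto.
    apply functional_extensionality. intros t; symmetry; apply AE; auto. }
  assert (T2 : Rabs (Aop G2 y - Aop G1 y) <= 2 * rho * M).
  { rewrite !AE, <- RInt_minus_R by auto. apply (supp_bound D rho M y); auto. }
  assert (T1 : Rabs (Aop (Aop G2) x - Aop (Aop G1) x) <= 2 * rho * M).
  { rewrite (AAE G2 (CPsi+1)), (AAE G1 (CPsi+1)) by auto.
    rewrite <- RInt_minus_R by (apply (goodA _ (CPsi+1)); auto).
    rewrite (RInt_ext _ (fun t => RInt D (t - /2) (t + /2))).
    2:{ intros t _. unfold D. rewrite RInt_minus_R; auto. }
    eapply Rle_trans. apply abs_RInt_le_const. lra. apply (goodA D M); auto.
    intros t _. apply (supp_bound D rho M t); auto. lra. }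
  assert (T3 : d * Rabs (G2 z - G1 z) <= d * M).
  { apply Rmult_le_compat_l; [lra|]. apply (DM z). }
  assert (E : 2 * rho * M + 2 * rho * M + d * M = (16*CPsi/(d0*d0) + 2*CPsi/d0) * d * L).
  { unfold rho, M. field. lra. }
  lra.
Qed.
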